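(* Let $\ell\geq 4$, let $a_1,\dots,a_\ell\in\mathbb{R}\setminus\{0\}$, and let $B\subseteq\mathbb{R}$ with $|B|=4$. Then \[ \left|\left\{ I\subseteq[\ell] : \sum_{i\in I}a_i\in B\right\}\right| \leq \frac{15}{16}2^{\ell}.\] *)

(* Defs.v *)
From mathcomp Require Import all_boot all_order all_algebra.
From mathcomp Require Import reals.
Set Implicit Arguments. Unset Strict Implicit. Unset Printing Implicit Defensive.

(* Main.v *)
Require Import Defs.
From mathcomp Require Import all_boot all_order all_algebra.
From mathcomp Require Import reals.
Set Implicit Arguments. Unset Strict Implicit. Unset Printing Implicit Defensive.
Import Order.TTheory GRing.Theory Num.Theory.
Local Open Scope ring_scope.

Definition Kset (R : realType) l (a : 'I_l -> R) (j : nat) : {set 'I_l} :=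
  [set i : 'I_l | ((i < j)%N && (0 < a i)) || ((j <= i)%N && (i < 4)%N && (a i < 0))].

Lemma step (R : realType) l (a : 'I_l -> R) (j : nat) :
  (j < 4)%N -> (j < l)%N -> (forall i, a i != 0) ->
  \sum_(i in Kset a j) a i < \sum_(i in Kset a j.+1) a i.
Proof.
move=> j4 jl a0; rewrite big_mkcond [X in _ < X]big_mkcond /=.
pose i0 : 'I_l := Ordinal jl.
rewrite (bigD1 i0) //= [X in _ < X](bigD1 i0) //=.
have -> : \sum_(i < l | i != i0) (if i \in Kset a j.+1 then a i else 0)
   = \sum_(i < l | i != i0) (if i \in Kset a j then a i else 0).
  apply: eq_bigr => i ne; rewrite !inE.
  have nej : nat_of_ord i != j by [].
  case: (ltngtP i j) => h; last by rewrite h eqxx in nej.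
    by rewrite ltnS (ltnW h).
  by rewrite ltnS leqNgt h.
rewrite ltrD2r !inE /= ltnn leqnn j4 ltnSn orbF.
have := a0 i0; case: (ltrgtP (a i0) 0) => // h _.
Qed.

Lemma core (R : realType) l (a : 'I_l -> R) (B : seq R) :
  (4 <= l)%N -> (forall i, a i != 0) -> uniq B -> size B = 4%N ->
  forall J : {set 'I_l}, (forall i, i \in J -> (4 <= i)%N) ->
  exists K : {set 'I_l}, K \subset [set i : 'I_l | (i < 4)%N] /\
     (\sum_(i in K :|: J) a i) \notin B.
Proof.
move=> l4 a0 uB sB J HJ.
have sumU (K : {set 'I_l}) : K \subset [set i : 'I_l | (i < 4)%N] ->
    \sum_(i in K :|: J) a i = \sum_(i in K) a i + \sum_(i in J) a i.
  move=> KS; rewrite big_mkcond [X in _ = X + _]big_mkcond [X in _ = _ + X]big_mkcond.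
  rewrite -big_split /=; apply: eq_bigr => i _; rewrite inE.
  case: (boolP (i \in K)) => iK; case: (boolP (i \in J)) => iJ /=;
    rewrite ?addr0 ?add0r //.
  have := subsetP KS i iK; rewrite inE ltnNge.
  by rewrite (HJ i iJ).
have KS j : (j <= 4)%N -> Kset a j \subset [set i : 'I_l | (i < 4)%N].
  move=> j4; apply/subsetP => i; rewrite !inE.
  case/orP => [/andP[h _]|/andP[/andP[_ h] _]] //.
  exact: leq_trans h j4.
case: (pickP [pred K : {set 'I_l} | (K \subset [set i : 'I_l | (i < 4)%N])
   && (\sum_(i in K :|: J) a i \notin B)]) => [K /andP[K1 K2]|H].
  by exists K.
pose c := \sum_(i in J) a i.
pose g j := \sum_(i in Kset a j) a i + c.
have inB j : (j <= 4)%N -> g j \in B.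
  move=> j4; have := H (Kset a j); rewrite /= KS //= => /negbFE.
  by rewrite sumU // KS.
have st j : (j < 4)%N -> g j < g j.+1.
  move=> j4; rewrite ltrD2r; apply: step => //.
  exact: leq_trans j4 l4.
have U : uniq [:: g 0; g 1; g 2; g 3; g 4]%N.
  by apply: lt_sorted_uniq; rewrite /= !st.
have := uniq_leq_size U.
have sub : {subset [:: g 0; g 1; g 2; g 3; g 4]%N <= B}.
  by move=> x; rewrite !inE => /or4P[/eqP->|/eqP->|/eqP->|/orP[/eqP->|/eqP->]]; apply: inB.
by move=> /(_ B sub); rewrite sB.
Qed.

Theorem lemma4p1 (R : realType) (l : nat) (a : 'I_l -> R) (B : seq R) :
  (4 <= l)%N ->
  (forall i, a i != 0) ->
  uniq B -> size B = 4%N ->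
  (#|[set I : {set 'I_l} | (\sum_(i in I) a i) \in B]|%:R : R)
    <= (15 / 16) * 2 ^+ l.
Proof.
move=> l4 a0 uB sB.
pose S := [set i : 'I_l | (i < 4)%N].
have cS : #|S| = 4%N.
  rewrite -sum1_card (eq_bigl (fun i : 'I_l => (i < 4)%N)); last by move=> i; rewrite inE.
  by rewrite -(big_ord_widen l (fun _ => 1%N)) // sum1_card card_ord.
have cSc : #|~: S| = (l - 4)%N by rewrite cardsCs setCK card_ord cS.
have main : (#|[set I : {set 'I_l} | (\sum_(i in I) a i)%R \in B]| <= 15 * 2 ^ (l - 4))%N.
  rewrite -sum1_card (partition_big (fun I : {set 'I_l} => I :&: ~: S) (fun J => J \subset ~: S)) /=; last by move=> I _; apply: subsetIr.
  apply: (@leq_trans (\sum_(J : {set 'I_l} | J \subset ~: S) 15)%N).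
    apply: leq_sum => J HJ.
    rewrite sum1dep_card.
    have HJ' : forall i, i \in J -> (4 <= i)%N.
      by move=> i iJ; have := subsetP HJ i iJ; rewrite !inE; case: ltnP.
    have [K0 [K0S K0B]] := core l4 a0 uB sB HJ'.
    pose X := [set I : {set 'I_l} | I :&: ~: S == J].
    have JS : J :&: S = set0.
      apply/setP=> i; rewrite !inE; case: (boolP (i \in J)) => // iJ.
      by rewrite ltnNge (HJ' i iJ).
    have XE : X = (fun K => K :|: J) @: powerset S.
      apply/setP => I; rewrite inE; apply/eqP/imsetP.
        move=> <-; exists (I :&: S); first by rewrite powersetE subsetIr.
        by rewrite -setIUr setUCr setIT.
      case=> K; rewrite powersetE => KS ->.
      rewrite setIUl (setIidPl HJ).
      have -> : K :&: ~: S = set0 by rewrite -setDE; apply/eqP; rewrite setD_eq0.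
      by rewrite set0U.
    have cX : #|X| = 16%N.
      rewrite XE card_in_imset; first by rewrite card_powerset cS.
      move=> K K'; rewrite !powersetE => KS K'S E.
      have : (K :|: J) :&: S = (K' :|: J) :&: S by rewrite E.
      by rewrite !setIUl JS !setU0 (setIidPl KS) (setIidPl K'S).
    have x0X : K0 :|: J \in X by rewrite XE; apply: imset_f; rewrite powersetE.
    have cX' : #|X :\ (K0 :|: J)| = 15%N.
      by move: cX; rewrite (cardsD1 (K0 :|: J)) x0X => [[]].
    rewrite -cX'; apply: subset_leq_card; apply/subsetP => I.
    rewrite inE => /andP[IA IJ].
    rewrite !inE IJ andbT; apply/eqP => E.
    by move: IA; rewrite E inE (negbTE K0B).
  rewrite sum_nat_const.
  have -> : #|[pred J : {set 'I_l} | J \subset ~: S]| = #|powerset (~: S)|.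
    by apply: eq_card => J; rewrite powersetE.
  by rewrite card_powerset cSc mulnC.
apply: (le_trans (_ : _ <= (15 * 2 ^ (l - 4))%N%:R)); first by rewrite ler_nat; exact: main.

rewrite -{2}(subnK l4) exprD natrM natrX.
have -> : (2 : R) ^+ 4 = 16 by rewrite -natrX.
rewrite [_ * 16]mulrC mulrA divfK ?pnatr_eq0 //; exact: lexx.
Qed.
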